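(* Let $A_{i,j}(z)=|z|^\gamma(|z|^2\delta_{i,j}-z_iz_j)$ on $\mathbb{R}^d$ with $-d-1\le\gamma\le 1$, and let $s_t:\mathbb{R}^d\to\mathbb{R}^d$ be any sufficiently regular time-dependent vector field. Consider the continuity equation $$\frac{\partial u_t}{\partial t}+\nabla\cdot(v_tu_t)=0,\qquad v_t(x)=-\int_{\mathbb{R}^d}A(x-y)\big[s_t(x)-s_t(y)\big]\,\mathrm{d}u_t(y),$$ with initial density $u_0$. 1. The density solution $u_t$ conserves mass, momentum and energy: $\int u_t=\int u_0$, $\int xu_t=\int xu_0$, $\int|x|^2u_t=\int|x|^2u_0$; moreover the estimated entropy $\mathcal{E}_t:=\int_0^t\int_{\mathbb{R}^d}s_\tau(x)\cdot v_\tau(x)u_\tau(x)\,\mathrm{d}x\,\mathrm{d}\tau$ satisfies $\frac{\mathrm{d}}{\mathrm{d}t}\mathcal{E}_t\le 0$. 2. The particle solution $\frac1n\sum_{i=1}^n\delta_{X_i(t)}$ with $\frac{\mathrm{d}X_i}{\mathrm{d}t}=v_t(X_i)$, where $v_t(X_i)=-\frac1n\sum_{j=1}^nA(X_i-X_j)[s_t(X_i)-s_t(X_j)]$, conserves mass, momentum and energy: $\frac1n\sum_iX_i(t)=\frac1n\sum_iX_i(0)$ and $\frac1n\sum_i|X_i(t)|^2=\frac1n\sum_i|X_i(0)|^2$; moreover $\mathcal{E}_t:=\frac1n\int_0^t\sum_{i=1}^n s_\tau(X_i)\cdot v_\tau(X_i)\,\mathrm{d}\tau$ satisfies $\frac{\mathrm{d}}{\mathrm{d}t}\mathcal{E}_t\le0$.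 3. The forward-Euler time-discretized particle solution $X_i^{k+1}=X_i^k+\Delta t\, v(X_i^k)$, where $v(X_i^k)=-\frac1n\sum_{j=1}^nA(X_i^k-X_j^k)[s(X_i^k)-s(X_j^k)]$ and $\{X_i^k\}_{i=1}^n$ are the particle locations at time $t_k=k\Delta t$, conserves mass and momentum, $\frac1n\sum_iX_i^{k+1}=\frac1n\sum_iX_i^k$, and the estimated entropy $\mathcal{E}^k:=\frac{\Delta t}{n}\sum_{j=1}^k\sum_{i=1}^n s(X_i^j)\cdot v(X_i^j)$ satisfies $\mathcal{E}^{k+1}\le\mathcal{E}^k$.
   Context: Solutions of the continuity equation are understood in the weak sense: $u_t$ is a curve of probability measures with $\frac{\mathrm{d}}{\mathrm{d}t}\int\phi\,\mathrm{d}u_t=\int\nabla\phi\cdot v_t\,\mathrm{d}u_t$ for all test functions $\phi$. *)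

(* Defs.v *)
From HB Require Import structures.
From mathcomp Require Import all_boot all_order all_algebra.
From mathcomp Require Import all_classical all_reals all_analysis.

Set Implicit Arguments.
Unset Strict Implicit.
Unset Printing Implicit Defensive.

Import Order.TTheory GRing.Theory Num.Theory numFieldNormedType.Exports.

Local Open Scope classical_set_scope.
Local Open Scope ring_scope.

(* R^d is represented by row vectors 'rV[R]_d.  We equip it with the  *)
(* sigma-algebra generated by the coordinate projections (this is the *)
(* Borel sigma-algebra of R^d), exactly as MathComp-Analysis does for *)
(* n.-tuple T.                                                        *)
Definition rV_measure_display : measure_display -> measure_display.
Proof. exact. Qed.

Section measurable_rV.
Context {R : realType} (d : nat).

Definition rV_coord : 'I_d -> 'rV[R]_d -> R := fun i x => x ord0 i.

Let rV_set0 : g_sigma_preimage rV_coord set0.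
Proof. exact: sigma_algebra0. Qed.

Let rV_setC A : g_sigma_preimage rV_coord A -> g_sigma_preimage rV_coord (~` A).
Proof. exact: sigma_algebraC. Qed.

Let rV_bigcup (F : _^nat) : (forall i, g_sigma_preimage rV_coord (F i)) ->
  g_sigma_preimage rV_coord (\bigcup_i (F i)).
Proof. exact: sigma_algebra_bigcup. Qed.

HB.instance Definition _ := @isMeasurable.Build
  (rV_measure_display default_measure_display)
  'rV[R]_d (g_sigma_preimage rV_coord) rV_set0 rV_setC rV_bigcup.

End measurable_rV.

Definition dotv {R : realType} {d : nat} (x y : 'rV[R]_d) : R :=
  \sum_(k < d) x ord0 k * y ord0 k.

Definition enorm {R : realType} {d : nat} (x : 'rV[R]_d) : R :=
  Num.sqrt (dotv x x).

Definition Akernel {R : realType} {d : nat} (gamma : R) (z : 'rV[R]_d)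
  : 'M[R]_d :=
  (enorm z `^ gamma) *: ((dotv z z) *: 1%:M - z^T *m z).

Definition matvec {R : realType} {d : nat} (M : 'M[R]_d) (w : 'rV[R]_d)
  : 'rV[R]_d :=
  \row_k \sum_(l < d) M k l * w ord0 l.

Definition vel_cont {R : realType} {d : nat} (gamma : R)
  (u : {measure set 'rV[R]_d -> \bar R}) (s : 'rV[R]_d -> 'rV[R]_d)
  (x : 'rV[R]_d) : 'rV[R]_d :=
  \row_k - Rintegral u setT
            (fun y => (matvec (Akernel gamma (x - y)) (s x - s y)) ord0 k).

Definition vel_part {R : realType} {d n : nat} (gamma : R)
  (s : 'rV[R]_d -> 'rV[R]_d) (X : 'I_n -> 'rV[R]_d) (i : 'I_n) : 'rV[R]_d :=
  - ((n%:R)^-1 *: \sum_(j < n) matvec (Akernel gamma (X i - X j)) (s (X i) - s (X j))).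

(* Test functions for the weak formulation: C^1-type functions with
   polynomial growth (|phi| <= C(1+|x|^2), |grad phi| <= C(1+|x|)), a
   class containing 1, x_k and |x|^2.  grad phi(x) . w is 'd phi x w. *)
Definition test_fun {R : realType} {d : nat} (phi : 'rV[R]_d -> R) : Prop :=
  (forall x, differentiable phi x) /\
  exists C : R, forall x,
    `|phi x| <= C * (1 + dotv x x) /\
    forall w, `|'d phi x w| <= C * (1 + enorm x) * enorm w.

(* Weak solution on t >= 0 of  d_t u + div(V_t u) = 0 :
   for every test function phi, t |-> \int phi du_t is continuous on [0,oo)
   and for t > 0,  d/dt \int phi du_t = \int grad phi . V_t du_t. *)
Definition weak_solution {R : realType} {d : nat}
  (u : R -> probability 'rV[R]_d R) (V : R -> 'rV[R]_d -> 'rV[R]_d) : Prop :=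
  forall phi : 'rV[R]_d -> R, test_fun phi ->
    {within [set t : R | 0 <= t],
       continuous (fun t => Rintegral (u t) setT phi)} /\
    forall t : R, 0 < t ->
      derivable (fun t => Rintegral (u t) setT phi) t 1 /\
      derive1 (fun t => Rintegral (u t) setT phi) t =
        Rintegral (u t) setT (fun x => 'd phi x (V t x)).

(* Main.v *)
Require Import Defs.
From HB Require Import structures.
From mathcomp Require Import all_boot all_order all_algebra.
From mathcomp Require Import all_classical all_reals all_analysis.
From mathcomp Require Import ring lra.
From mathcomp Require Import measurable_realfun.

Import Order.TTheory GRing.Theory Num.Theory numFieldNormedType.Exports.

Local Open Scope classical_set_scope.
Local Open Scope ring_scope.

Section Alg.
Context {R : realType} {d : nat}.
Implicit Types (a b z w : 'rV[R]_d).

Lemma dotvC a b : dotv a b = dotv b a.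
Proof. by rewrite /dotv; apply: eq_bigr => k _; rewrite mulrC. Qed.

Lemma dotvDl a b w : dotv (a + b) w = dotv a w + dotv b w.
Proof. by rewrite /dotv -big_split; apply: eq_bigr => k _; rewrite !mxE mulrDl. Qed.

Lemma dotvNl a w : dotv (- a) w = - dotv a w.
Proof. by rewrite /dotv -sumrN; apply: eq_bigr => k _; rewrite !mxE mulNr. Qed.

Lemma dotvBl a b w : dotv (a - b) w = dotv a w - dotv b w.
Proof. by rewrite dotvDl dotvNl. Qed.

Lemma dotvDr a b w : dotv w (a + b) = dotv w a + dotv w b.
Proof. by rewrite dotvC dotvDl !(dotvC w). Qed.

Lemma dotvNr a w : dotv w (- a) = - dotv w a.
Proof. by rewrite dotvC dotvNl dotvC. Qed.

Lemma dotvBr a b w : dotv w (a - b) = dotv w a - dotv w b.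
Proof. by rewrite dotvDr dotvNr. Qed.

Lemma dotvZr c a w : dotv w (c *: a) = c * dotv w a.
Proof. by rewrite /dotv mulr_sumr; apply: eq_bigr => k _; rewrite !mxE mulrCA. Qed.

Lemma dotvZl c a w : dotv (c *: a) w = c * dotv a w.
Proof. by rewrite dotvC dotvZr dotvC. Qed.

Lemma dotv_ge0 a : 0 <= dotv a a.
Proof. by apply: sumr_ge0 => k _; rewrite -expr2 sqr_ge0. Qed.

Lemma dotv_eq0 a : dotv a a = 0 -> a = 0.
Proof.
move=> /eqP; rewrite psumr_eq0 => [/allP H|k _]; last by rewrite -expr2 sqr_ge0.
apply/rowP => k; rewrite mxE; have /H : k \in index_enum 'I_d by rewrite mem_index_enum.
by rewrite /= mulf_eq0 orbb => /eqP.
Qed.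

Lemma CS a z : dotv a z ^+ 2 <= dotv a a * dotv z z.
Proof.
have [z0|zn0] := eqVneq (dotv z z) 0.
  have az0 : dotv a z = 0.
    by rewrite (dotv_eq0 z z0) /dotv big1 // => k _; rewrite mxE mulr0.
  by rewrite az0 z0 expr0n mulr0.
have := dotv_ge0 (dotv z z *: a - dotv a z *: z).
rewrite !(dotvBl, dotvBr, dotvZl, dotvZr) (dotvC z a).
move=> H.
have : 0 <= dotv z z * (dotv a a * dotv z z - dotv a z ^+ 2).
  by apply: (le_trans H); rewrite le_eqVlt; apply/orP; left; apply/eqP; ring.
rewrite pmulr_rge0 ?subr_ge0 //.

by rewrite lt_neqAle eq_sym zn0 dotv_ge0.
Qed.

Lemma sum_delta (k : 'I_d) (f : 'I_d -> R) : \sum_(l < d) (k == l)%:R * f l = f k.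
Proof.
rewrite (bigD1 k) //= eqxx mul1r big1 ?addr0 // => l /negbTE; rewrite eq_sym => ->.
by rewrite mul0r.
Qed.

Lemma Aentry g z (k l : 'I_d) :
  Akernel g z k l = enorm z `^ g * (dotv z z * (k == l)%:R - z ord0 k * z ord0 l).
Proof. by rewrite /Akernel !mxE big_ord1 !mxE. Qed.

Lemma matvecE M b (k : 'I_d) : matvec M b ord0 k = \sum_(l < d) M k l * b ord0 l.
Proof. by rewrite mxE. Qed.

Lemma dotA g a b z : dotv a (matvec (Akernel g z) b) =
  enorm z `^ g * (dotv z z * dotv a b - dotv a z * dotv z b).
Proof.
rewrite /dotv.
transitivity (\sum_(k < d) a ord0 k * (enorm z `^ g * (dotv z z * b ord0 k
     - z ord0 k * dotv z b))).
  apply: eq_bigr => k _; congr (_ * _); rewrite matvecE.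
  under eq_bigr do rewrite Aentry.
  transitivity (\sum_(l < d) (enorm z `^ g * dotv z z * ((k == l)%:R * b ord0 l)
     - enorm z `^ g * z ord0 k * (z ord0 l * b ord0 l))).
    by apply: eq_bigr => l _; ring.
  rewrite sumrB -!mulr_sumr sum_delta /dotv; ring.
set c := \sum_(i < d) z ord0 i * b ord0 i.
transitivity (\sum_(k < d) (enorm z `^ g * dotv z z * (a ord0 k * b ord0 k)
   - enorm z `^ g * c * (a ord0 k * z ord0 k))).
  by apply: eq_bigr => k _; rewrite /c /dotv; ring.
by rewrite sumrB -!mulr_sumr /dotv; ring.
Qed.

Lemma enormN z : enorm (- z) = enorm z.
Proof. by rewrite /enorm dotvNl dotvNr opprK. Qed.

Lemma AkernelN g z : Akernel g (- z) = Akernel g z.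
Proof.
apply/matrixP => k l; rewrite !Aentry enormN dotvNl dotvNr opprK !mxE; ring.
Qed.

Lemma matvecN M b : matvec M (- b) = - matvec M b.
Proof.
apply/rowP => k; rewrite !mxE -sumrN; apply: eq_bigr => l _; rewrite mxE; ring.
Qed.

Lemma A_z g z b : dotv z (matvec (Akernel g z) b) = 0.
Proof. rewrite dotA; ring. Qed.

Lemma A_psd g w z : 0 <= dotv w (matvec (Akernel g z) w).
Proof.
rewrite dotA mulr_ge0 ?powR_ge0 // (dotvC z w) -expr2 subr_ge0 mulrC.
exact: CS.
Qed.
End Alg.

Section Disc.
Context {R : realType} {d : nat}.

Lemma dotv_sumr n (w : 'rV[R]_d) (f : 'I_n -> 'rV[R]_d) :
  dotv w (\sum_(j < n) f j) = \sum_(j < n) dotv w (f j).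
Proof.
rewrite /dotv; under eq_bigr do rewrite summxE mulr_sumr.
by rewrite exchange_big.
Qed.

Lemma sum_antisym n (Phi psi : 'I_n -> 'I_n -> R) :
  (forall i j, Phi i j + Phi j i = psi i j) ->
  \sum_(i < n) \sum_(j < n) Phi i j = (\sum_(i < n) \sum_(j < n) psi i j) / 2.
Proof.
move=> H.
have -> : \sum_(i < n) \sum_(j < n) psi i j =
   \sum_(i < n) \sum_(j < n) Phi i j + \sum_(i < n) \sum_(j < n) Phi j i.
  by rewrite -big_split; apply: eq_bigr => i _; rewrite -big_split; apply: eq_bigr => j _; exact/esym/H.
rewrite (exchange_big _ _ _ _ _ (fun i j => Phi j i)) /=; by field.
Qed.

Lemma sum_antisym0 n (P : 'I_n -> 'I_n -> 'rV[R]_d) :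
  (forall i j, P j i = - P i j) -> \sum_(i < n) \sum_(j < n) P i j = 0.
Proof.
move=> H; set x := \sum_(i < n) _.
have hx : x = - x.
  rewrite {1}/x exchange_big /= -sumrN; apply: eq_bigr => i _.
  rewrite -sumrN; apply: eq_bigr => j _; exact: H.
have : (2 : R) *: x = 0 by rewrite scaler_nat mulr2n {1}hx addNr.
by move/eqP; rewrite scaler_eq0 pnatr_eq0 /= => /eqP.
Qed.

Variables (g : R) (n : nat) (s : 'rV[R]_d -> 'rV[R]_d) (Y : 'I_n -> 'rV[R]_d).
Let P i j := matvec (Akernel g (Y i - Y j)) (s (Y i) - s (Y j)).

Let Panti i j : P j i = - P i j.
Proof. by rewrite /P -opprB AkernelN -(opprB (s (Y i))) matvecN. Qed.

Let velE i : vel_part g s Y i = - ((n%:R)^-1 *: \sum_(j < n) P i j).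
Proof. by []. Qed.

Lemma sum_vel : \sum_(i < n) vel_part g s Y i = 0.
Proof.
under eq_bigr do rewrite velE.
by rewrite sumrN -scaler_sumr sum_antisym0 // scaler0 oppr0.
Qed.

Let dot_vel w i : dotv w (vel_part g s Y i) = - ((n%:R)^-1 * \sum_(j < n) dotv w (P i j)).
Proof. by rewrite velE dotvNr dotvZr dotv_sumr. Qed.

Lemma sum_dot_vel_Y : \sum_(i < n) dotv (Y i) (vel_part g s Y i) = 0.
Proof.
have H i j : dotv (Y i) (P i j) + dotv (Y j) (P j i) = (fun _ _ => 0) i j.
  by rewrite (Panti i j) dotvNr -dotvBl; exact: A_z.
under eq_bigr do rewrite dot_vel.
rewrite sumrN -mulr_sumr (sum_antisym _ _ _ H) big1 ?mul0r ?mulr0 ?oppr0 // => i _.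
exact: big1.
Qed.

Lemma sum_dot_vel_s : \sum_(i < n) dotv (s (Y i)) (vel_part g s Y i) <= 0.
Proof.
have H i j : dotv (s (Y i)) (P i j) + dotv (s (Y j)) (P j i) =
   dotv (s (Y i) - s (Y j)) (P i j).
  by rewrite (Panti i j) dotvNr -dotvBl.
under eq_bigr do rewrite dot_vel.
rewrite sumrN -mulr_sumr (sum_antisym _ _ _ H) oppr_le0 mulr_ge0 ?invr_ge0 ?ler0n //.
rewrite divr_ge0 ?ler0n //; apply: sumr_ge0 => i _; apply: sumr_ge0 => j _.
exact: A_psd.
Qed.
End Disc.

Lemma part3 {R : realType} {d : nat} (gamma : R) :
  (forall (n : nat) (s : 'rV[R]_d -> 'rV[R]_d) (dt : R)
          (X : nat -> 'I_n -> 'rV[R]_d),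
     0 < dt ->
     (forall k i, X k.+1 i = X k i + dt *: vel_part gamma s (X k) i) ->
     (forall k, (n%:R)^-1 *: \sum_(i < n) X k.+1 i
                = (n%:R)^-1 *: \sum_(i < n) X k i) /\
     (let E := fun k : nat => dt / n%:R *
                 \sum_(1 <= j < k.+1) \sum_(i < n)
                    dotv (s (X j i)) (vel_part gamma s (X j) i) in
      forall k, E k.+1 <= E k)).
Proof.
move=> n s dt X dt0 step; split.
  move=> k; congr (_ *: _); under eq_bigr do rewrite step.
  by rewrite big_split /= -scaler_sumr sum_vel scaler0 addr0.
move=> E k; rewrite /E big_nat_recr //= mulrDr gerDl.
by rewrite mulr_ge0_le0 ?sum_dot_vel_s // divr_ge0 ?ler0n // ltW.
Qed.

Section An.
Context {R : realType}.

Lemma within_at (g : R -> R) t : {within [set t : R | 0 <= t], continuous g} -> 0 < t ->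
  {for t, continuous g}.
Proof.
move=> cg t0.
have : {within `]0, +oo[, continuous g}.
  apply: continuous_subspaceW cg => x /=; rewrite in_itv /= andbT; exact: ltW.
rewrite continuous_open_subspace; last exact: interval_open.
by apply; rewrite inE /= in_itv /= andbT.
Qed.

Lemma const_deriv0 (f : R -> R) : {within [set t : R | 0 <= t], continuous f} ->
  (forall t, 0 < t -> derivable f t 1 /\ derive1 f t = 0) ->
  forall t, 0 <= t -> f t = f 0.
Proof.
move=> cf df t; rewrite le_eqVlt => /orP[/eqP <-//|t0].
have cf' : {within `[0, t], continuous f}.
  by apply: continuous_subspaceW cf => x /=; rewrite in_itv /= => /andP[].
have d1 x : x \in `]0, t[ -> derivable f x 1.
  by rewrite in_itv /= => /andP[x0 _]; case: (df x x0).
have d2 x : x \in `]0, t[ -> derive1 f x = 0.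
  by rewrite in_itv /= => /andP[x0 _]; case: (df x x0).
apply/eqP; rewrite eq_le; apply/andP; split.
- apply: (ler0_derive1_le_cc d1 _ cf') => //.
  + by move=> x /d2 ->.
  + by rewrite in_itv /= lexx ltW.
  + by rewrite in_itv /= lexx ltW.
  + exact: ltW.
- apply: (ger0_derive1_le_cc d1 _ cf') => //.
  + by move=> x /d2 ->.
  + by rewrite in_itv /= lexx ltW.
  + by rewrite in_itv /= lexx ltW.
  + exact: ltW.
Qed.

Lemma ftc0 (g : R -> R) : {within [set t : R | 0 <= t], continuous g} ->
  forall t, 0 < t ->
  derivable (fun t : R => Rintegral lebesgue_measure `[0, t] g) t 1 /\
  derive1 (fun t : R => Rintegral lebesgue_measure `[0, t] g) t = g t.
Proof.
move=> cg t t0.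
apply: (@continuous_FTC1_closed R g 0 t (t + 1)).
- by rewrite ltrDl.
- apply: continuous_compact_integrable; first exact: segment_compact.

  by apply: continuous_subspaceW cg => x /=; rewrite in_itv /= => /andP[].
- exact: t0.
- exact: within_at.
Qed.

Lemma is_derive1_split (f : R -> R) (t v : R) : is_derive t 1 f v -> derivable f t 1 /\ derive1 f t = v.
Proof. by move=> H; split; [exact: ex_derive | rewrite derive1E derive_val]. Qed.

Lemma is_derive_sumf n (h : 'I_n -> R -> R) (t : R) (dh : 'I_n -> R) :
  (forall i, is_derive t 1 (h i) (dh i)) ->
  is_derive t 1 (fun x => \sum_(i < n) h i x) (\sum_(i < n) dh i).
Proof. by move=> H; rewrite -fct_sumE; exact: is_derive_sum. Qed.

Lemma is_derive_mul (f g : R -> R) (t df dg : R) : is_derive t 1 f df -> is_derive t 1 g dg ->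
  is_derive t 1 (fun x => f x * g x) (f t * dg + g t * df).
Proof. by move=> Hf Hg; exact: is_deriveM. Qed.

Lemma is_derive_coord {d : nat} (X : R -> 'rV[R]_d) (t : R) (k : 'I_d) :
  derivable X t 1 -> is_derive t 1 (fun x => X x ord0 k) (derive1 X t ord0 k).
Proof.
move=> dX; apply: DeriveDef; first by move/derivable_mxP: dX; apply.
by rewrite derive1E derive_mx // mxE.
Qed.

Lemma cont_sumf (A : set R) n (h : 'I_n -> R -> R) :
  (forall i, {within A, continuous (h i)}) ->
  {within A, continuous (fun x => \sum_(i < n) h i x)}.
Proof.
move=> H; elim: n h H => [|n IH] h H.
  under eq_fun do rewrite big_ord0; move=> x; exact: cvg_cst.
under eq_fun do rewrite big_ord_recr /=.
move=> x; apply: continuousD; first exact: (IH (fun i => h (widen_ord (leqnSn n) i))).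
exact: H.
Qed.

Lemma cont_coord {d : nat} (A : set R) (X : R -> 'rV[R]_d) (k : 'I_d) :
  {within A, continuous X} -> {within A, continuous (fun x => X x ord0 k)}.
Proof.
move=> cX x; apply: (@continuous_comp _ _ _ _ (fun M : 'rV[R]_d => M ord0 k)).
  exact: cX.
exact: coord_continuous.
Qed.
End An.

Section Meas.
Context {R : realType} {d : nat}.
Local Notation rV := 'rV[R]_d.

Lemma meas_coord (k : 'I_d) : measurable_fun setT (fun x : rV => x ord0 k).
Proof.
move=> _ Y mY; rewrite setTI; apply: sub_sigma_algebra => /=.
rewrite -bigcup_seq/=; exists k => /=; first by rewrite mem_index_enum.
by exists Y => //; rewrite setTI.
Qed.

Context {dT : measure_display} {T : measurableType dT}.

Lemma meas_dotv (f g : T -> rV) :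
  (forall k, measurable_fun setT (fun x => f x ord0 k)) ->
  (forall k, measurable_fun setT (fun x => g x ord0 k)) ->
  measurable_fun setT (fun x => dotv (f x) (g x)).
Proof.
move=> mf mg; rewrite /dotv; apply: measurable_sum => k.
exact: measurable_funM.
Qed.

Lemma meas_comp_coord (f : T -> rV) (h : rV -> rV) :
  measurable_fun setT h ->
  (forall k, measurable_fun setT (fun x => f x ord0 k)) ->
  measurable_fun setT f ->
  forall k, measurable_fun setT (fun x => h (f x) ord0 k).
Proof.
move=> mh _ mf k.
exact: (measurableT_comp (meas_coord k) (measurableT_comp mh mf)).
Qed.

Lemma meas_enormpow (g : R) (f : T -> rV) :
  (forall k, measurable_fun setT (fun x => f x ord0 k)) ->
  measurable_fun setT (fun x => enorm (f x) `^ g).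
Proof.
move=> mf; apply: (measurableT_comp (measurable_powR g)).
apply: (measurableT_comp (continuous_measurable_fun (@sqrt_continuous R))).
exact: meas_dotv.
Qed.

Lemma meas_Fv (g : R) (z w : T -> rV) :
  (forall k, measurable_fun setT (fun x => z x ord0 k)) ->
  (forall k, measurable_fun setT (fun x => w x ord0 k)) ->
  forall k, measurable_fun setT (fun x => matvec (Akernel g (z x)) (w x) ord0 k).
Proof.
move=> mz mw k.
under eq_fun do rewrite matvecE.
apply: measurable_sum => l; apply: measurable_funM => //.
under eq_fun do rewrite Aentry.
apply: measurable_funM; first exact: meas_enormpow.
apply: measurable_funB.
  by apply: measurable_funM; [exact: meas_dotv|exact: measurable_cst].
exact: measurable_funM.
Qed.


Lemma meas_rV_fun (f : T -> rV) :
  (forall k, measurable_fun setT (fun x => f x ord0 k)) -> measurable_fun setT f.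
Proof.
move=> mf; apply: (@measurability _ _ _ _ setT f (\big[setU/set0]_(i < d)
   preimage_set_system setT (@rV_coord R d i) measurable)) => //.
move=> _ [S + <-].
rewrite -bigcup_seq => -[i _ [B mB <-]].
rewrite setTI -comp_preimage setTI.
by have := mf i measurableT B mB; rewrite setTI.
Qed.

End Meas.

Lemma coord_le {R : realType} {m n : nat} (x : 'M[R]_(m, n)) i j : `|x i j| <= `|x|.
Proof.
rewrite [X in _ <= X]/Num.Def.normr /= mx_normrE.
exact: (le_bigmax _ (fun ij : 'I_m * 'I_n => `|x ij.1 ij.2|) (i, j)).
Qed.

Section Core.
Context {R : realType} {d : nat} (gamma : R) (P : probability 'rV[R]_d R)
  (s c : 'rV[R]_d -> 'rV[R]_d) (C : R).
Local Notation rV := 'rV[R]_d.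
Hypothesis ms : measurable_fun setT s.
Hypothesis mc : measurable_fun setT c.
Hypothesis cb : forall x, `|c x| <= C * (1 + `|x| + `|s x|).
Hypothesis iK : ((P \x P)%E).-integrable setT
          (fun p : rV * rV =>
             (`|Akernel gamma (p.1 - p.2)| * `|s p.1 - s p.2|
              * (1 + `|p.1| + `|s p.1|))%:E).

Let K (p : rV * rV) := `|Akernel gamma (p.1 - p.2)| * `|s p.1 - s p.2|
              * (1 + `|p.1| + `|s p.1|).
Let Fv (p : rV * rV) := matvec (Akernel gamma (p.1 - p.2)) (s p.1 - s p.2).
Let G (p : rV * rV) := dotv (c p.1) (Fv p).

Let K_ge0 p : 0 <= K p.
Proof. by rewrite /K !mulr_ge0 // addr_ge0 // addr_ge0. Qed.

Let AS_le_K p : `|Akernel gamma (p.1 - p.2)| * `|s p.1 - s p.2| <= K p.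
Proof.
rewrite /K ler_peMr ?mulr_ge0 // -addrA lerDl addr_ge0 //.
Qed.

Let Fv_bound p k : `|Fv p ord0 k| <= (`|Akernel gamma (p.1 - p.2)| * `|s p.1 - s p.2|) *+ d.
Proof.
rewrite /Fv matvecE; apply: (le_trans (ler_norm_sum _ _ _)).
apply: (@le_trans _ _ (\sum_(l < d) (`|Akernel gamma (p.1 - p.2)| * `|s p.1 - s p.2|))).
  by apply: ler_sum => l _; rewrite normrM ler_pM // coord_le.
by rewrite sumr_const card_ord.
Qed.

Let G_bound p : `|G p| <= (C * (d%:R * d%:R)) * K p.
Proof.
rewrite /G /dotv; apply: (le_trans (ler_norm_sum _ _ _)).
apply: (@le_trans _ _ (\sum_(k < d) (C * (1 + `|p.1| + `|s p.1|)) *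
     ((`|Akernel gamma (p.1 - p.2)| * `|s p.1 - s p.2|) *+ d))).
  apply: ler_sum => k _; rewrite normrM ler_pM //.
  exact: le_trans (coord_le _ _ _) (cb _).
rewrite sumr_const card_ord /K -mulr_natr -mulr_natr le_eqVlt; apply/orP; left; apply/eqP; ring.
Qed.

Let mz k : measurable_fun setT (fun p : rV * rV => (p.1 - p.2) ord0 k).
Proof.
under eq_fun do rewrite !mxE.
apply: measurable_funB.
  exact: (measurableT_comp (meas_coord k) measurable_fst).
exact: (measurableT_comp (meas_coord k) measurable_snd).
Qed.

Let mw k : measurable_fun setT (fun p : rV * rV => (s p.1 - s p.2) ord0 k).
Proof.
under eq_fun do rewrite !mxE.
apply: measurable_funB.
  exact: (measurableT_comp (meas_coord k) (measurableT_comp ms measurable_fst)).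
exact: (measurableT_comp (meas_coord k) (measurableT_comp ms measurable_snd)).
Qed.

Let mFv k : measurable_fun setT (fun p => Fv p ord0 k).
Proof. exact: meas_Fv. Qed.

Let mG : measurable_fun setT G.
Proof.
apply: meas_dotv => // k.
exact: (measurableT_comp (meas_coord k) (measurableT_comp mc measurable_fst)).
Qed.

Let iFv k : ((P \x P)%E).-integrable setT (fun p => (Fv p ord0 k)%:E).
Proof.
apply: (le_integrable measurableT _ _ (integrableZl measurableT (d%:R) iK)).
  exact/measurable_EFinP.
move=> p _ /=; rewrite lee_fin.
apply: (le_trans (Fv_bound p k)); rewrite mulr_natl.
apply: le_trans (ler_norm _); rewrite ler_wMn2r //.
Qed.

Let iG : ((P \x P)%E).-integrable setT (fun p => (G p)%:E).
Proof.
apply: (le_integrable measurableT _ _ (integrableZl measurableT (C * (d%:R * d%:R)) iK)).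
  exact/measurable_EFinP.
move=> p _; rewrite /= lee_fin.
exact: le_trans (G_bound p) (ler_norm _).
Qed.


Let mGE : measurable_fun setT (fun p => (G p)%:E).
Proof. exact/measurable_EFinP. Qed.

Let iGs : ((P \x P)%E).-integrable setT (fun p => (G (p.2, p.1))%:E).
Proof.
have mGs : measurable_fun setT (fun p : rV * rV => (G (p.2, p.1))%:E).
  apply/measurable_EFinP.
  exact: (measurableT_comp mG (measurable_fun_pair measurable_snd measurable_fst)).
apply/(@integrable12ltyP _ _ _ _ _ P P _ mGs).
exact: ((@integrable21ltyP _ _ _ _ _ P P _ mGE).1 iG).
Qed.

Let eq_swap : (\int[P \x P]_p (G (p.2, p.1))%:E = \int[P \x P]_p (G p)%:E)%E.
Proof. by rewrite -(integral12_prod_meas1 iGs) -(integral21_prod_meas1 iG). Qed.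

Let H p := dotv (c p.1 - c p.2) (Fv p).

Let HE p : H p = G p + G (p.2, p.1).
Proof.
rewrite /H /G /Fv /= -[p.2 - p.1]opprB AkernelN -[s p.2 - s p.1]opprB matvecN dotvNr dotvBl.
by [].
Qed.

Let fG : (\int[P \x P]_p (G p)%:E)%E \is a fin_num.
Proof. exact: integrable_fin_num iG. Qed.

Let intH : (\int[P \x P]_p (H p)%:E = 2%:E * \int[P \x P]_p (G p)%:E)%E.
Proof.
under eq_integral do rewrite HE EFinD.
rewrite (integralD measurableT iG iGs) eq_swap -(fineK fG) -EFinD -EFinM.
by congr EFin; ring.
Qed.


Let good x := forall k : 'I_d, P.-integrable setT (fun y => (Fv (x, y) ord0 k)%:E).

Let ae_good : \forall x \ae P, good x.
Proof. apply: filter_forall => k; exact: (ae_integrable1 (iFv k)). Qed.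

Let Vcoord x k : vel_cont gamma P s x ord0 k = - fine (\int[P]_y (Fv (x, y) ord0 k)%:E)%E.
Proof. by rewrite mxE. Qed.

Let point x : good x ->
  (dotv (c x) (vel_cont gamma P s x))%:E = (- (\int[P]_y (G (x, y))%:E))%E.
Proof.
move=> gx; rewrite /dotv -sumEFin.
transitivity (\sum_(k < d) - ((c x ord0 k)%:E * \int[P]_y (Fv (x, y) ord0 k)%:E))%E.
  apply: eq_bigr => k _; rewrite Vcoord mulrN EFinN EFinM fineK //.
  by apply: integrable_fin_num => //; exact: gx.
rewrite sumeN; last first.
  move=> i j _ _; apply: fin_num_adde_defl.
  by rewrite fin_numM // (integrable_fin_num measurableT (gx j)).
congr (- _)%E.
transitivity (\sum_(k < d) \int[P]_y ((c x ord0 k * Fv (x, y) ord0 k)%:E))%E.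
  apply: eq_bigr => k _; rewrite -integralZl //; try exact: gx.
rewrite -integral_sum //.
  by apply: eq_integral => y _; rewrite sumEFin.
move=> k; under eq_fun do rewrite EFinM.
exact: integrableZl (gx k).
Qed.

Let mV : measurable_fun setT (fun x => (dotv (c x) (vel_cont gamma P s x))%:E).
Proof.
apply/measurable_EFinP; apply: meas_dotv => k.
  exact: (measurableT_comp (meas_coord k) mc).
under eq_fun do rewrite Vcoord.
apply: measurable_funN; apply: measurableT_comp => //.
exact: (measurable_fubini_F (iFv k)).
Qed.

Lemma core_sym : Rintegral P setT (fun x => dotv (c x) (vel_cont gamma P s x)) =
  - Rintegral ((P \x P)%E) setT (fun p => dotv (c p.1 - c p.2) (Fv p)) / 2.
Proof.
rewrite /Rintegral.
have -> : (\int[P]_x (dotv (c x) (vel_cont gamma P s x))%:E)%E =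
          (\int[P]_x - fubini_F P (fun p => (G p)%:E) x)%E.
  apply: ae_eq_integral => //.
    apply: measurableT_comp => //; exact: (measurable_fubini_F iG).
  by apply: filterS ae_good => x gx _; exact: point.
rewrite integralN; last exact: (integrable_add_def measurableT (integrable_fubini_F iG)).
rewrite (integral12_prod_meas1 iG).
have -> : (\int[P \x P]_x (dotv (c x.1 - c x.2) (Fv x))%:E)%E =
   (\int[P \x P]_x (H x)%:E)%E by [].
rewrite intH fineN fineM //; by field.
Qed.

End Core.

Section TF.
Context {R : realType} {d : nat}.
Local Notation rV := 'rV[R]_d.

Lemma is_diff_coord k (x : rV) : is_diff x (fun y : rV => y ord0 k) (fun w : rV => w ord0 k).
Proof.
have lin : linear (fun N : rV => N ord0 k) by move=> a y z; rewrite !mxE.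
pose lM := GRing.isLinear.Build _ _ _ _ _ lin.
pose L : {linear rV -> R} := HB.pack (fun N : rV => N ord0 k) lM.
have cc : continuous (fun N : rV => N ord0 k) by move=> y; exact: coord_continuous.
have E : (fun N : rV => N ord0 k) = L by rewrite funeqE.
rewrite E in cc *.
apply: DiffDef; [exact: linear_differentiable | exact: diff_lin].
Qed.

Lemma is_diff_sumf n (f df : 'I_n -> rV -> R) x :
  (forall i, is_diff x (f i) (df i)) ->
  is_diff x (\sum_(i < n) f i) (\sum_(i < n) df i).
Proof.
by move=> H; elim/big_ind2 : _ => // [|? ? ? ? ? ?]; [exact: is_diff_cst|exact: is_diffD].
Qed.

Lemma is_diff_dotv (x : rV) : is_diff x (fun y : rV => dotv y y) (fun w => 2 * dotv x w).
Proof.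
have H := @is_diff_sumf d (fun k => (fun y : rV => y ord0 k) * (fun y : rV => y ord0 k))
  (fun k => x ord0 k *: (fun w : rV => w ord0 k) + x ord0 k *: (fun w : rV => w ord0 k)) x
  (fun k => is_diffM (is_diff_coord k x) (is_diff_coord k x)).
have E1 : (fun y : rV => dotv y y) = \sum_(k < d) ((fun y : rV => y ord0 k) * (fun y : rV => y ord0 k)).
  by apply/funext => y; rewrite fct_sumE /dotv.
have E2 : (fun w : rV => 2 * dotv x w) = \sum_(k < d) (x ord0 k *: (fun w : rV => w ord0 k) + x ord0 k *: (fun w : rV => w ord0 k)).
  apply/funext => w; rewrite fct_sumE /dotv mulr_sumr; apply: eq_bigr => k _ /=.
  by rewrite !fctE /= -mulr2n mulr_natl.
by rewrite E1 E2.
Qed.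

Lemma coord_le_enorm (x : rV) k : `|x ord0 k| <= enorm x.
Proof.
rewrite /enorm -sqrtr_sqr ler_wsqrtr // /dotv (bigD1 k) //= -expr2 lerDl.
by apply: sumr_ge0 => j _; rewrite -expr2 sqr_ge0.
Qed.

Lemma enorm_ge0 (x : rV) : 0 <= enorm x.
Proof. exact: sqrtr_ge0. Qed.

Lemma enorm_sqr (x : rV) : enorm x ^+ 2 = dotv x x.
Proof. by rewrite /enorm sqr_sqrtr // dotv_ge0. Qed.

Lemma dotv_le_enorm (x w : rV) : `|dotv x w| <= enorm x * enorm w.
Proof.
rewrite -sqrtr_sqr /enorm -sqrtrM ?dotv_ge0 //; apply: ler_wsqrtr.
exact: CS.
Qed.

Lemma test_coord k : test_fun (fun x : rV => x ord0 k).
Proof.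
split; first by move=> x; have [] := is_diff_coord k x.
exists 1 => x; split.
  rewrite mul1r; apply: (le_trans (coord_le_enorm x k)).
  rewrite -enorm_sqr; have := enorm_ge0 x; nra.
move=> w; rewrite (@diff_val _ _ _ _ _ _ _ (is_diff_coord k x)) mul1r.
apply: (le_trans (coord_le_enorm w k)); have := enorm_ge0 x; have := enorm_ge0 w; nra.
Qed.

Lemma test_dotv : test_fun (fun x : rV => dotv x x).
Proof.
split; first by move=> x; have [] := is_diff_dotv x.
exists 2 => x; split.
  rewrite ger0_norm ?dotv_ge0 //; have := dotv_ge0 x; lra.
move=> w; rewrite (@diff_val _ _ _ _ _ _ _ (is_diff_dotv x)) normrM ger0_norm // -mulrA ler_pM2l //.
apply: (le_trans (dotv_le_enorm x w)).
have := enorm_ge0 x; have := enorm_ge0 w; nra.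
Qed.

Lemma d_coord k (x w : rV) : 'd (fun y : rV => y ord0 k) x w = w ord0 k.
Proof. by rewrite (@diff_val _ _ _ _ _ _ _ (is_diff_coord k x)). Qed.

Lemma d_dotv (x w : rV) : 'd (fun y : rV => dotv y y) x w = 2 * dotv x w.
Proof. by rewrite (@diff_val _ _ _ _ _ _ _ (is_diff_dotv x)). Qed.

Definition erow (k : 'I_d) : rV := \row_j (j == k)%:R.

Lemma dotv_erow k (w : rV) : dotv (erow k) w = w ord0 k.
Proof.
rewrite /dotv (bigD1 k) //= mxE eqxx mul1r big1 ?addr0 // => j /negbTE jk.
by rewrite mxE jk mul0r.
Qed.

Lemma norm_erow k : `|erow k| <= 1.
Proof.
rewrite [X in X <= _]/Num.Def.normr /= mx_normrE; apply: bigmax_le => //= ij _.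
by rewrite mxE; case: eqP; rewrite ?normr1 ?normr0.
Qed.
End TF.

Lemma part2 {R : realType} {d : nat} (gamma : R) :
  (forall (n : nat) (s : R -> 'rV[R]_d -> 'rV[R]_d)
          (X : 'I_n -> R -> 'rV[R]_d),
     (forall i, {within [set t : R | 0 <= t], continuous (X i)}) ->
     (forall i t, 0 < t ->
        derivable (X i) t 1 /\
        derive1 (X i) t = vel_part gamma (s t) (fun j => X j t) i) ->
     {within [set t : R | 0 <= t],
        continuous (fun tau => \sum_(i < n)
           dotv (s tau (X i tau)) (vel_part gamma (s tau) (fun j => X j tau) i))} ->
     (forall t, 0 <= t ->
        (n%:R)^-1 *: \sum_(i < n) X i t = (n%:R)^-1 *: \sum_(i < n) X i 0 /\
        (n%:R)^-1 * \sum_(i < n) dotv (X i t) (X i t)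
          = (n%:R)^-1 * \sum_(i < n) dotv (X i 0) (X i 0)) /\
     (let E := fun t => (n%:R)^-1 * Rintegral lebesgue_measure `[0, t]
                 (fun tau => \sum_(i < n)
                    dotv (s tau (X i tau))
                         (vel_part gamma (s tau) (fun j => X j tau) i)) in
      forall t, 0 < t -> derivable E t 1 /\ derive1 E t <= 0)).
Proof.
move=> n s X cX dX cE; split.
  move=> t t0; split.
    congr (_ *: _); apply/rowP => k; rewrite !summxE.
    apply: (@const_deriv0 _ (fun t => \sum_(i < n) X i t ord0 k)) => //.
      by apply: cont_sumf => i; apply: cont_coord.
    move=> {t0}t t0; apply: is_derive1_split.
    apply: is_derive_eq; first by apply: is_derive_sumf => i; apply: is_derive_coord; case: (dX i t t0).
    under eq_bigr do rewrite (proj2 (dX _ t t0)).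
    by rewrite -summxE sum_vel mxE.
  congr (_ * _).
  apply: (@const_deriv0 _ (fun t => \sum_(i < n) dotv (X i t) (X i t))) => //.
    apply: cont_sumf => i; rewrite /dotv; apply: cont_sumf => k.
    move=> x; apply: continuousM; exact: cont_coord.
  move=> {t0}t t0; apply: is_derive1_split.
  apply: is_derive_eq.
    apply: is_derive_sumf => i; apply: is_derive_sumf => k.
    by apply: is_derive_mul; apply: is_derive_coord; case: (dX i t t0).
  under eq_bigr do under eq_bigr do rewrite (proj2 (dX _ t t0)).
  transitivity (2 * \sum_(i < n) dotv (X i t) (vel_part gamma (s t) (fun j => X j t) i)).
    rewrite mulr_sumr; apply: eq_bigr => i _; rewrite /dotv mulr_sumr; apply: eq_bigr => k _.
    ring.
  by rewrite (sum_dot_vel_Y gamma n (s t) (fun j => X j t)) mulr0.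
move=> E t t0.
have [dF F'] := ftc0 _ cE _ t0.
have H : is_derive t 1 E ((n%:R)^-1 *: (\sum_(i < n)
                    dotv (s t (X i t))
                         (vel_part gamma (s t) (fun j => X j t) i))).
  rewrite -F' derive1E; exact: (is_deriveZ _ (derivableP dF)).
have [D1 ->] := is_derive1_split _ _ _ H; split => //.
rewrite mulr_ge0_le0 ?invr_ge0 ?ler0n //.
exact: sum_dot_vel_s.
Qed.

Lemma dotv0l {R : realType} {d : nat} (w : 'rV[R]_d) : dotv 0 w = 0.
Proof. by rewrite /dotv big1 // => j _; rewrite mxE mul0r. Qed.

Lemma Rint0 {R : realType} {dT : measure_display} {T : measurableType dT}
  (mu : {measure set T -> \bar R}) (D : set T) : Rintegral mu D (fun _ => 0) = 0.
Proof. by rewrite /Rintegral integral0_eq. Qed.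

Lemma part1 {R : realType} {d : nat} (gamma : R) :
  (forall (s : R -> 'rV[R]_d -> 'rV[R]_d) (u : R -> probability 'rV[R]_d R),
     let V := fun t => vel_cont gamma (u t) (s t) in
     weak_solution u V ->
     (forall t, 0 <= t -> measurable_fun setT (s t)) ->
     (forall t, 0 <= t ->
        (u t).-integrable setT (fun x => (dotv x x)%:E)) ->
     (forall t, 0 <= t ->
        ((u t) \x (u t))%E.-integrable setT
          (fun p : 'rV[R]_d * 'rV[R]_d =>
             (`|Akernel gamma (p.1 - p.2)| * `|s t p.1 - s t p.2|
              * (1 + `|p.1| + `|s t p.1|))%:E)) ->
     {within [set t : R | 0 <= t],
        continuous (fun t => Rintegral (u t) setT
                               (fun x => dotv (s t x) (V t x)))} ->
     (forall t, 0 <= t ->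
        u t setT = u 0 setT /\
        (forall k : 'I_d, Rintegral (u t) setT (fun x => x ord0 k)
                          = Rintegral (u 0) setT (fun x => x ord0 k)) /\
        Rintegral (u t) setT (fun x => dotv x x)
          = Rintegral (u 0) setT (fun x => dotv x x)) /\
     (let E := fun t => Rintegral lebesgue_measure `[0, t]
                 (fun tau => Rintegral (u tau) setT
                               (fun x => dotv (s tau x) (V tau x))) in
      forall t, 0 < t -> derivable E t 1 /\ derive1 E t <= 0)).
Proof.
move=> s u V WS ms i2 iK cE.
have core t (c : 'rV[R]_d -> 'rV[R]_d) (C : R) : 0 <= t -> measurable_fun setT c ->
    (forall x, `|c x| <= C * (1 + `|x| + `|s t x|)) ->
    Rintegral (u t) setT (fun x => dotv (c x) (V t x)) =
    - Rintegral ((u t) \x (u t))%E setT (fun p => dotv (c p.1 - c p.2)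
        (matvec (Akernel gamma (p.1 - p.2)) (s t p.1 - s t p.2))) / 2.
  by move=> t0 mc cb; rewrite /V; exact: (core_sym gamma (u t) (s t) c C (ms t t0) mc cb (iK t t0)).
split.
  move=> t t0; split; first by rewrite !probability_setT.
  split.
    move=> k; have [cphi dphi] := WS _ (test_coord k).
    apply: (@const_deriv0 _ (fun t => Rintegral (u t) setT (fun x => x ord0 k)) cphi) => //.
    move=> t1 t10; have [D1 ->] := dphi t1 t10; split => //.
    under eq_Rintegral do rewrite d_coord -(dotv_erow k).
    rewrite (core t1 (fun _ => erow k) 1 (ltW t10)) //.
    - under eq_Rintegral do rewrite subrr dotv0l.
      by rewrite Rint0 oppr0 mul0r.
    - move=> x; rewrite mul1r; apply: le_trans (norm_erow k) _.
      by rewrite -addrA lerDl addr_ge0.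
  have [cphi dphi] := WS _ test_dotv.
  apply: (@const_deriv0 _ (fun t => Rintegral (u t) setT (fun x => dotv x x)) cphi) => //.
  move=> t1 t10; have [D1 ->] := dphi t1 t10; split => //.
  under eq_Rintegral do rewrite d_dotv -dotvZl.
  rewrite (core t1 (fun x => 2 *: x) 2 (ltW t10)) //.
  - under eq_Rintegral do rewrite -scalerBr dotvZl A_z mulr0.
    by rewrite Rint0 oppr0 mul0r.
  - by apply: meas_rV_fun => k; under eq_fun do rewrite mxE; apply: measurable_funM => //; exact: meas_coord.
  - move=> x; rewrite normrZ ger0_norm // ler_pM2l //; have := normr_ge0 (s t1 x); lra.
move=> E t t0.
have [D1 ->] := ftc0 _ cE _ t0; split => //.
rewrite (core t (s t) 1 (ltW t0)) //.
- rewrite mulNr oppr_le0 divr_ge0 // Rintegral_ge0 // => p _.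
  exact: A_psd.
- exact: ms (ltW t0).
- by move=> x; rewrite mul1r lerDr addr_ge0.
Qed.

Theorem proposition3p1 (R : realType) (d : nat) (gamma : R)
  (hgamma : - (d%:R) - 1 <= gamma <= 1) :
  (* 1. density (measure) solution of the continuity equation *)
  (forall (s : R -> 'rV[R]_d -> 'rV[R]_d) (u : R -> probability 'rV[R]_d R),
     let V := fun t => vel_cont gamma (u t) (s t) in
     (* u solves d_t u + div(V u) = 0 weakly, V_t = v_t computed from u_t *)
     weak_solution u V ->
     (* regularity ("s sufficiently regular") *)
     (forall t, 0 <= t -> measurable_fun setT (s t)) ->
     (forall t, 0 <= t ->
        (u t).-integrable setT (fun x => (dotv x x)%:E)) ->
     (forall t, 0 <= t ->
        ((u t) \x (u t))%E.-integrable setT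
          (fun p : 'rV[R]_d * 'rV[R]_d =>
             (`|Akernel gamma (p.1 - p.2)| * `|s t p.1 - s t p.2|
              * (1 + `|p.1| + `|s t p.1|))%:E)) ->
     {within [set t : R | 0 <= t],
        continuous (fun t => Rintegral (u t) setT
                               (fun x => dotv (s t x) (V t x)))} ->
     (forall t, 0 <= t ->
        (* mass *)
        u t setT = u 0 setT /\
        (* momentum *)
        (forall k : 'I_d, Rintegral (u t) setT (fun x => x ord0 k)
                          = Rintegral (u 0) setT (fun x => x ord0 k)) /\
        (* energy *)
        Rintegral (u t) setT (fun x => dotv x x)
          = Rintegral (u 0) setT (fun x => dotv x x)) /\
     (* estimated entropy E_t = \int_0^t \int s_tau . v_tau du_tau dtau *)
     (let E := fun t => Rintegral lebesgue_measure `[0, t]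
                 (fun tau => Rintegral (u tau) setT
                               (fun x => dotv (s tau x) (V tau x))) in
      forall t, 0 < t -> derivable E t 1 /\ derive1 E t <= 0)) /\
  (* 2. particle solution *)
  (forall (n : nat) (s : R -> 'rV[R]_d -> 'rV[R]_d)
          (X : 'I_n -> R -> 'rV[R]_d),
     (forall i, {within [set t : R | 0 <= t], continuous (X i)}) ->
     (forall i t, 0 < t ->
        derivable (X i) t 1 /\
        derive1 (X i) t = vel_part gamma (s t) (fun j => X j t) i) ->
     {within [set t : R | 0 <= t],
        continuous (fun tau => \sum_(i < n)
           dotv (s tau (X i tau)) (vel_part gamma (s tau) (fun j => X j tau) i))} ->
     (forall t, 0 <= t ->
        (n%:R)^-1 *: \sum_(i < n) X i t = (n%:R)^-1 *: \sum_(i < n) X i 0 /\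
        (n%:R)^-1 * \sum_(i < n) dotv (X i t) (X i t)
          = (n%:R)^-1 * \sum_(i < n) dotv (X i 0) (X i 0)) /\
     (let E := fun t => (n%:R)^-1 * Rintegral lebesgue_measure `[0, t]
                 (fun tau => \sum_(i < n)
                    dotv (s tau (X i tau))
                         (vel_part gamma (s tau) (fun j => X j tau) i)) in
      forall t, 0 < t -> derivable E t 1 /\ derive1 E t <= 0)) /\
  (* 3. forward-Euler time-discretized particle solution *)
  (forall (n : nat) (s : 'rV[R]_d -> 'rV[R]_d) (dt : R)
          (X : nat -> 'I_n -> 'rV[R]_d),
     0 < dt ->
     (forall k i, X k.+1 i = X k i + dt *: vel_part gamma s (X k) i) ->
     (forall k, (n%:R)^-1 *: \sum_(i < n) X k.+1 i
                = (n%:R)^-1 *: \sum_(i < n) X k i) /\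
     (let E := fun k : nat => dt / n%:R *
                 \sum_(1 <= j < k.+1) \sum_(i < n)
                    dotv (s (X j i)) (vel_part gamma s (X j) i) in
      forall k, E k.+1 <= E k)).
Proof.
split; first exact: part1.
split; first exact: part2.
exact: part3.
Qed.
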